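(* Let $n\ge1$ be an integer, $I,\Lambda$ non-empty sets, $P$ a $\Lambda\times I$ matrix with entries in $\mathbb{Z}_{n}\cup\{\mathbf{0}\}$, and $S=M^{0}[\mathbb{Z}_{n};I,\Lambda;P]$. Let $A$ be a finite alphabet, $\varphi:A\to S$ any map, and $\bar\varphi:A^{+}\to S$ its unique extension to a semigroup morphism. Then for every non-zero element $s=(i,g,\lambda)\in S$, the language $s\bar\varphi^{-1}\subseteq A^{+}$ has generalised star-height at most $1$.
   Context: $\mathbb{Z}_n$ is the cyclic group of order $n$ written additively. For a group $G$, non-empty sets $I,\Lambda$ and a $\Lambda\times I$ matrix $P=(p_{\lambda i})$ with entries in $G\cup\{\mathbf{0}\}$ ($\mathbf{0}$ a new symbol), the Rees zero-matrix semigroup $M^{0}[G;I,\Lambda;P]$ is $(I\times G\times\Lambda)\cup\{\mathbf{0}\}$ with $(i,g,\lambda)(j,h,\mu)=(i,g\,p_{\lambda j}\,h,\mu)$ if $p_{\lambda j}\ne\mathbf{0}$, $=\mathbf{0}$ if $p_{\lambda j}=\mathbf{0}$, and $x\mathbf{0}=\mathbf{0}x=\mathbf{0}$. Generalised regular expressions over $A$: $\emptyset$, $\varepsilon$ and each letter are expressions; if $E,F$ are expressions so are $E\cup F$, $EF$, $E^{\ast}$, $E^{c}$ (complement in $A^{\ast}$). Star-height: $h(\emptyset)=h(\varepsilon)=h(a)=0$, $h(E\cup F)=h(EF)=\max\{h(E),h(F)\}$, $h(E^{\ast})=h(E)+1$, $h(E^{c})=h(E)$; the star-height of a language is the minimum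 of $h(E)$ over expressions $E$ representing it. *)

(* Defs.v *)
From HB Require Import structures.
From mathcomp Require Import all_boot all_order all_algebra.
Set Implicit Arguments. Unset Strict Implicit. Unset Printing Implicit Defensive.
Import GRing.Theory.

(* Elements: None = the zero 0, Some (i, g, l) = (i, g, l).
   The group G is additive (a zmodType), as Z_n is written additively.
   P : Lambda -> I -> option G, with None playing the role of the symbol 0. *)
Definition rees (G : Type) (I L : Type) := option (I * G * L).

Definition rees_mul (G : zmodType) (I L : Type) (P : L -> I -> option G)
  (x y : rees G I L) : rees G I L :=
  match x, y with
  | Some (i, g, l), Some (j, h, m) =>
      match P l j with
      | Some p => Some (i, (g + p + h)%R, m)
      | None => None
      end
  | _, _ => None
  end.

(* The unique extension of phi : A -> S to a semigroup morphism A^+ -> S,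
   represented on all words: None for the empty word (not in A^+),
   Some (phi a1 ... phi ak) for a nonempty word a1...ak. *)
Definition phibar (G : zmodType) (I L : Type) (P : L -> I -> option G)
  (A : Type) (phi : A -> rees G I L) (w : seq A) : option (rees G I L) :=
  match w with
  | [::] => None
  | a :: t => Some (foldl (rees_mul P) (phi a) (map phi t))
  end.

Definition preimage_lang (G : zmodType) (I L : Type) (P : L -> I -> option G)
  (A : Type) (phi : A -> rees G I L) (s : rees G I L) : seq A -> Prop :=
  fun w => phibar P phi w = Some s.

Inductive gre (A : Type) : Type :=
| GEmpty : gre A
| GEps : gre A
| GLetter : A -> gre A
| GUnion : gre A -> gre A -> gre A
| GConcat : gre A -> gre A -> gre A
| GStar : gre A -> gre A
| GCompl : gre A -> gre A.

Arguments GEmpty {A}.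
Arguments GEps {A}.

Inductive star_lang (A : Type) (K : seq A -> Prop) : seq A -> Prop :=
| star_nil : star_lang K [::]
| star_app u v : K u -> star_lang K v -> star_lang K (u ++ v).

Fixpoint gre_lang (A : Type) (E : gre A) : seq A -> Prop :=
  match E with
  | GEmpty => fun _ => False
  | GEps => fun w => w = [::]
  | GLetter a => fun w => w = [:: a]
  | GUnion E F => fun w => gre_lang E w \/ gre_lang F w
  | GConcat E F => fun w => exists u v, w = u ++ v /\ gre_lang E u /\ gre_lang F v
  | GStar E => star_lang (gre_lang E)
  | GCompl E => fun w => ~ gre_lang E w
  end.

Fixpoint star_height (A : Type) (E : gre A) : nat :=
  match E with
  | GEmpty | GEps | GLetter _ => 0
  | GUnion E F | GConcat E F => maxn (star_height E) (star_height F)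
  | GStar E => (star_height E).+1
  | GCompl E => star_height E
  end.

Definition gsh_le (A : Type) (K : seq A -> Prop) (k : nat) : Prop :=
  exists E : gre A, star_height E <= k /\ forall w, gre_lang E w <-> K w.

(* Main.v *)
Require Import Defs.
From mathcomp Require Import all_boot all_order all_algebra.
From Stdlib Require Import Classical.
Set Implicit Arguments. Unset Strict Implicit. Unset Printing Implicit Defensive.


Definition lang (A : Type) := seq A -> Prop.
Definition conc (A : Type) (K1 K2 : lang A) : lang A :=
  fun w => exists u v, w = u ++ v /\ K1 u /\ K2 v.

Lemma gsh_ext (A : Type) (K K' : lang A) k :
  (forall w, K w <-> K' w) -> gsh_le K k -> gsh_le K' k.
Proof. move=> H [E [hE HE]]; exists E; split=> // w; rewrite HE; exact: H. Qed.

Lemma gsh_mono (A : Type) (K : lang A) k k' : k <= k' -> gsh_le K k -> gsh_le K k'.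
Proof. move=> kk [E [hE HE]]; exists E; split=> //; exact: leq_trans kk. Qed.

Lemma gsh_union (A : Type) (K1 K2 : lang A) k :
  gsh_le K1 k -> gsh_le K2 k -> gsh_le (fun w => K1 w \/ K2 w) k.
Proof.
move=> [E [hE HE]] [F [hF HF]]; exists (GUnion E F); split.
  by rewrite /= geq_max hE hF.
by move=> w /=; rewrite HE HF.
Qed.

Lemma gsh_conc (A : Type) (K1 K2 : lang A) k :
  gsh_le K1 k -> gsh_le K2 k -> gsh_le (conc K1 K2) k.
Proof.
move=> [E [hE HE]] [F [hF HF]]; exists (GConcat E F); split.
  by rewrite /= geq_max hE hF.
move=> w /=; split=> [[u [v [-> [/HE ? /HF ?]]]]|[u [v [-> [/HE ? /HF ?]]]]];
  by exists u, v.
Qed.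

Lemma gsh_compl (A : Type) (K : lang A) k :
  gsh_le K k -> gsh_le (fun w => ~ K w) k.
Proof.
move=> [E [hE HE]]; exists (GCompl E); split=> // w /=; by rewrite HE.
Qed.

Lemma gsh_inter (A : Type) (K1 K2 : lang A) k :
  gsh_le K1 k -> gsh_le K2 k -> gsh_le (fun w => K1 w /\ K2 w) k.
Proof.
move=> h1 h2.
apply: (gsh_ext _ (gsh_compl (gsh_union (gsh_compl h1) (gsh_compl h2)))).
move=> w; split; last by move=> [a b] [].
by move=> H; split; apply: NNPP => N; apply: H; [left|right].
Qed.

Lemma gsh_const (A : Type) (Pr : Prop) k : gsh_le (fun _ : seq A => Pr) k.
Proof.
case: (classic Pr) => H.
  exists (GCompl GEmpty); split=> // w /=; tauto.
exists GEmpty; split=> // w /=; tauto.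
Qed.

Lemma gsh_eps (A : Type) k : gsh_le (fun w : seq A => w = [::]) k.
Proof. by exists GEps. Qed.

Lemma gsh_letters (A : finType) (Q : A -> Prop) k :
  gsh_le (fun w => exists x, w = [:: x] /\ Q x) k.
Proof.
have: forall s : seq A, gsh_le (fun w => exists x, w = [:: x] /\ Q x /\ x \in s) k.
  elim=> [|a s IH].
    by apply: (gsh_ext _ (gsh_const _ False k)) => w; split=> // [[x [_ [_]]]].
  case: (classic (Q a)) => Qa.
    apply: (gsh_ext _ (gsh_union IH (_ : gsh_le (fun w => w = [:: a]) k))).
      move=> w; split.
        by case=> [[x [-> [Qx xs]]]|->]; [exists x; rewrite inE xs orbT|exists a; rewrite inE eqxx].
      move=> [x [-> [Qx]]]; rewrite inE => /orP[/eqP->|xs]; [by right|left; by exists x].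
    by exists (GLetter a).
  apply: (gsh_ext _ IH) => w; split.
    by case=> x [-> [Qx xs]]; exists x; rewrite inE xs orbT.
  move=> [x [-> [Qx]]]; rewrite inE => /orP[/eqP xa|xs]; last by exists x.
  by rewrite xa in Qx.
move=> /(_ (enum A)) H; apply: (gsh_ext _ H) => w; split.
  by case=> x [-> [Qx _]]; exists x.
by case=> x [-> Qx]; exists x; rewrite mem_enum.
Qed.

Lemma gsh_all (A : Type) k : gsh_le (fun _ : seq A => True) k.
Proof. exact: gsh_const. Qed.

Lemma gsh_bigunion (A : Type) (T : finType) (K : T -> lang A) k :
  (forall x, gsh_le (K x) k) -> gsh_le (fun w => exists x, K x w) k.
Proof.
move=> HK.
have: forall s : seq T, gsh_le (fun w => exists x, x \in s /\ K x w) k.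
  elim=> [|a s IH].
    by apply: (gsh_ext _ (gsh_const _ False k)) => w; split=> // [[x []]].
  apply: (gsh_ext _ (gsh_union (HK a) IH)) => w; split.
    by case=> [Ka|[x [xs Kx]]]; [exists a; rewrite inE eqxx|exists x; rewrite inE xs orbT].
  move=> [x []]; rewrite inE => /orP[/eqP->|xs Kx]; [by left|right; by exists x].
move=> /(_ (enum T)) H; apply: (gsh_ext _ H) => w; split.
  by case=> x [_ Kx]; exists x.
by case=> x Kx; exists x; rewrite mem_enum.
Qed.

Lemma gsh_star (A : Type) (K : lang A) :
  gsh_le K 0 -> gsh_le (star_lang K) 1.
Proof.
move=> [E [hE HE]]; exists (GStar E); split; first by rewrite /= ltnS.
move=> w /=; split; elim=> [|u v Ku _ IH]; try exact: star_nil;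
  apply: star_app => //; exact/HE.
Qed.

Fixpoint lpow (A : Type) (K : lang A) (j : nat) : lang A :=
  match j with 0 => fun w => w = [::] | j'.+1 => conc K (lpow K j') end.

Lemma gsh_pow (A : Type) (K : lang A) j k : gsh_le K k -> gsh_le (lpow K j) k.
Proof. move=> H; elim: j => [|j IH] /=; [exact: gsh_eps|exact: gsh_conc]. Qed.

Lemma lpow_add (A : Type) (K : lang A) a b w :
  lpow K (a + b) w <-> conc (lpow K a) (lpow K b) w.
Proof.
elim: a w => [|a IH] w /=.
  by split=> [H|[u [v [-> [-> H]]]]] //; exists [::], w.
split.
  move=> [u [v [-> [Ku /IH [x [y [-> [Hx Hy]]]]]]]].
  by exists (u ++ x), y; rewrite catA; split=> //; split=> //; exists u, x.
move=> [x [y [-> [[u [v [-> [Ku Kv]]]] Hy]]]].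
exists u, (v ++ y); rewrite catA; split=> //; split=> //; apply/IH; by exists v, y.
Qed.

Lemma star_pow (A : Type) (K : lang A) n w :
  star_lang (lpow K n) w <-> exists q, lpow K (n * q) w.
Proof.
split.
  elim=> [|u v Ku _ [q Hq]]; first by exists 0; rewrite muln0.
  exists q.+1; rewrite mulnS; apply/lpow_add; by exists u, v.
move=> [q]; elim: q w => [|q IH] w; first by rewrite muln0 => ->; exact: star_nil.
rewrite mulnS => /lpow_add [u [v [-> [Hu Hv]]]]; apply: star_app => //; exact: IH.
Qed.


Definition Hcnt (A : Type) (n : nat) (cnt : seq A -> nat) :=
  forall r, gsh_le (fun w => cnt w %% n = r) 1.

Lemma sep_Hcnt (A : Type) n (cnt : seq A -> nat) (Y Z : lang A) :
  0 < n -> gsh_le Y 0 -> gsh_le Z 0 ->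
  (forall w, cnt w = 0 <-> Y w) ->
  (forall w k, cnt w = k.+1 <-> conc (fun u => cnt u = k) Z w) ->
  Hcnt n cnt.
Proof.
move=> n0 hY hZ H0 HS.
have Hk : forall k w, cnt w = k <-> conc Y (lpow Z k) w.
  elim=> [|k IH] w.
    rewrite H0; split=> [Yw|[u [v [-> [Yu ->]]]]]; last by rewrite cats0.
    by exists w, [::]; rewrite cats0.
  rewrite HS; split.
    move=> [u [v [-> [/IH [x [y [-> [Yx Hy]]]] Zv]]]].
    exists x, (y ++ v); rewrite catA; do 2!split=> //.
    rewrite -addn1; apply/lpow_add; exists y, v; do 2!split=> //.
    by exists v, [::]; rewrite cats0.
  move=> [x [y [-> [Yx]]]]; rewrite -addn1 => /lpow_add [u [v [-> [Hu [a [b [-> [Za ->]]]]]]]].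
  exists (x ++ u), a; rewrite cats0 catA; do 2!split=> //; apply/IH; by exists x, u.
move=> r; case: (ltnP r n) => rn; last first.
  apply: (gsh_ext _ (gsh_const _ False 1)) => w; split=> // E.
  by move: (ltn_pmod (cnt w) n0); rewrite E ltnNge rn.
have hE : gsh_le (conc Y (conc (lpow Z r) (star_lang (lpow Z n)))) 1.
  apply: gsh_conc; first exact: gsh_mono hY.
  apply: gsh_conc; first by apply: gsh_mono (gsh_pow _ hZ).
  by apply: gsh_star; apply: gsh_pow.
apply: (gsh_ext _ hE) => w; split.
  move=> [x [y [-> [Yx [u [v [-> [Hu /star_pow [q Hv]]]]]]]]].
  have : conc Y (lpow Z (r + n * q)) (x ++ u ++ v).
    exists x, (u ++ v); do 2!split=> //; apply/lpow_add; by exists u, v.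
  move/Hk => ->; by rewrite addnC mulnC modnMDl modn_small.
move=> E; have : cnt w = r + n * (cnt w %/ n) by rewrite addnC mulnC -E -divn_eq.
move/Hk=> [x [y [-> [Yx /lpow_add [u [v [-> [Hu Hv]]]]]]]].
exists x, (u ++ v); split=> //; split=> //; exists u, v; split=> //; split=> //.
apply (star_pow Z n v).2; eexists; exact Hv.
Qed.

Lemma Hcnt_add (A : Type) n (c1 c2 : seq A -> nat) :
  0 < n -> Hcnt n c1 -> Hcnt n c2 -> Hcnt n (fun w => c1 w + c2 w).
Proof.
move=> n0 h1 h2 r.
have H : gsh_le (fun w => exists s : 'I_n * 'I_n,
     (c1 w %% n = s.1 /\ c2 w %% n = s.2) /\ (s.1 + s.2) %% n = r) 1.
  apply: gsh_bigunion => s; apply: gsh_inter; last exact: gsh_const.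
  exact: gsh_inter.
apply: (gsh_ext _ H) => w; split.
  by move=> [s [[<- <-] <-]]; rewrite modnDm.
move=> <-; exists (Ordinal (ltn_pmod (c1 w) n0), Ordinal (ltn_pmod (c2 w) n0)).
by rewrite /= modnDm.
Qed.

Lemma Hcnt_scale (A : Type) n (c : seq A -> nat) k :
  0 < n -> Hcnt n c -> Hcnt n (fun w => k * c w).
Proof.
move=> n0 h r.
have H : gsh_le (fun w => exists s : 'I_n, c w %% n = s /\ (k * s) %% n = r) 1.
  apply: gsh_bigunion => s; apply: gsh_inter => //; exact: gsh_const.
apply: (gsh_ext _ H) => w; split.
  by move=> [s [<- <-]]; rewrite modnMmr.
move=> <-; exists (Ordinal (ltn_pmod (c w) n0)); by rewrite /= modnMmr.
Qed.

Lemma Hcnt_sub (A : Type) n (c1 c2 c3 : seq A -> nat) :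
  0 < n -> Hcnt n c2 -> Hcnt n c3 -> (forall w, c1 w + c2 w = c3 w) -> Hcnt n c1.
Proof.
move=> n0 h2 h3 E r; case: (ltnP r n) => rn; last first.
  apply: (gsh_ext _ (gsh_const _ False 1)) => w; split=> // E1.
  by move: (ltn_pmod (c1 w) n0); rewrite E1 ltnNge rn.
have H : gsh_le (fun w => exists s : 'I_n, c2 w %% n = s /\ c3 w %% n = (r + s) %% n) 1.
  apply: gsh_bigunion => s; exact: gsh_inter.
apply: (gsh_ext _ H) => w; split.
  move=> [s [E2 E3]]; move: E3; rewrite -E -modnDm E2 => /eqP.
  by rewrite eqn_modDr modn_mod (modn_small rn) => /eqP.
move=> E1; exists (Ordinal (ltn_pmod (c2 w) n0)); split=> //=.
by rewrite -E -E1 modnDm.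
Qed.

Lemma Hcnt_sum (A : Type) n (T : Type) (s : seq T) (Pr : pred T) (F : T -> seq A -> nat) :
  0 < n -> (forall x, Pr x -> Hcnt n (F x)) ->
  Hcnt n (fun w => \sum_(x <- s | Pr x) F x w).
Proof.
move=> n0 HF; elim: s => [|a s IH].
  move=> r; apply: (gsh_ext _ (gsh_const _ (0 %% n = r) 1)) => w.
  by rewrite big_nil.
case Pa: (Pr a).
- move=> r; apply: (gsh_ext _ (Hcnt_add n0 (HF a Pa) IH r)) => w; by rewrite big_cons Pa.
- move=> r; apply: (gsh_ext _ (IH r)) => w; by rewrite big_cons Pa.
Qed.


Definition pairb (A : eqType) (x y a : A) (t : seq A) : bool :=
  match t with b :: _ => (a == x) && (b == y) | [::] => false end.

Fixpoint cntp (A : eqType) (x y : A) (w : seq A) : nat :=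
  match w with [::] => 0 | a :: t => pairb x y a t + cntp x y t end.

Definition bound (A : eqType) (x y : A) (u z : seq A) : bool :=
  match u, z with a :: u', b :: _ => (last a u' == x) && (b == y) | _, _ => false end.

Lemma cntp_cat (A : eqType) (x y : A) u z :
  cntp x y (u ++ z) = cntp x y u + cntp x y z + bound x y u z.
Proof.
elim: u => [|a u IH] /=; first by rewrite addn0.
case: u IH => [|b u] IH /=.
  by case: z {IH} => [|c z] //=; rewrite ?addn0 // addnC.
by move: IH => /= ->; rewrite !addnA.
Qed.

Lemma cntp_pos (A : eqType) (x y : A) w :
  0 < cntp x y w -> exists u v, w = u ++ x :: y :: v /\ cntp x y (y :: v) = 0.
Proof.
elim: w => [|a t IH] //=.
case: (posnP (cntp x y t)) => [t0|/IH [u [v [-> H]]]]; last first.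
  by move=> _; exists (a :: u), v.
rewrite t0 addn0; case: t t0 {IH} => [|b t] //= t0.
case: (a =P x) => // ->; case: (b =P y) => // Eb _; subst b; exists [::], t; split=> //.
Qed.

Lemma cntp_zero (A : eqType) (x y : A) w :
  cntp x y w = 0 <-> ~ exists u v, w = u ++ x :: y :: v.
Proof.
split.
  move=> H [u [v E]]; move: H; rewrite E cntp_cat /= !eqxx /=.
  by rewrite addnC addnA addnC.
move=> H; case: (posnP (cntp x y w)) => // /cntp_pos [u [v [E _]]].
by case: H; exists u, v.
Qed.

Lemma cntp_succ (A : eqType) (x y : A) w k : x != y ->
  cntp x y w = k.+1 <->
  exists u v, w = u ++ x :: y :: v /\ cntp x y u = k /\ cntp x y v = 0.
Proof.
move=> xy; split.
  move=> E; have : 0 < cntp x y w by rewrite E.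
  move=> /cntp_pos [u [v [Ew Hv]]]; exists u, v; split=> //.
  move: E Hv; rewrite Ew; clear Ew; rewrite cntp_cat /= !eqxx /=.
  have -> : bound x y u [:: x, y & v] = false.
    case: u => [|a u] //=; apply/negP => /andP [_ /eqP yx].
    by rewrite yx eqxx in xy.
  have -> : pairb x y y v = false.
    by case: v => //= b v; rewrite (eq_sym y x) (negbTE xy).
  rewrite add0n => E Hv; split=> //; move: E; rewrite Hv addn0 addn1 /= addn0; by case.
move=> [u [v [-> [Hu Hv]]]]; rewrite cntp_cat /= !eqxx /= Hu Hv.
have -> : bound x y u [:: x, y & v] = false.
  case: u {Hu} => [|a u] //=; apply/negP => /andP [_ /eqP yx].
  by rewrite yx eqxx in xy.
have -> : pairb x y y v = false.
  by case: v {Hv} => //= b v; rewrite (eq_sym y x) (negbTE xy).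
by rewrite /= !addn0 addn1.
Qed.

Lemma mem_split_last (A : eqType) (x : A) w :
  x \in w -> exists u v, w = u ++ x :: v /\ x \notin v.
Proof.
elim: w => [|a t IH] //=; rewrite inE.
case xt: (x \in t).
  by move=> _; case: (IH xt) => u [v [-> H]]; exists (a :: u), v.
rewrite orbF => /eqP Ex; exists [::], t; by rewrite -Ex xt.
Qed.

Lemma count_succ (A : eqType) (x : A) w k :
  count_mem x w = k.+1 <->
  exists u v, w = u ++ x :: v /\ count_mem x u = k /\ x \notin v.
Proof.
split.
  move=> E; have : x \in w by rewrite -has_pred1 has_count E.
  case/mem_split_last => u [v [Ew xv]]; exists u, v; do !split=> //.
  move: E; rewrite Ew count_cat /= eqxx.
  by move/count_memPn: xv => ->; rewrite addn0 addn1; case.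
move=> [u [v [-> [Hu xv]]]]; rewrite count_cat /= eqxx Hu.
by move/count_memPn: xv => ->; rewrite addn0 addn1.
Qed.

Definition lasti (A : eqType) (x : A) (w : seq A) : bool :=
  match w with [::] => false | a :: t => last a t == x end.

Lemma sum_delta (A : finType) (F : A -> nat) (a : A) :
  \sum_(x : A) F x * (a == x) = F a.
Proof.
rewrite (bigD1 a) //= eqxx muln1 big1 ?addn0 // => x /negbTE.
by rewrite eq_sym => ->; rewrite muln0.
Qed.

Lemma cnt_identity (A : finType) (x : A) w :
  \sum_(y : A) cntp x y w + lasti x w = count_mem x w.
Proof.
elim: w => [|a t IH]; first by rewrite big1.
have -> : \sum_(y : A) cntp x y (a :: t) = \sum_(y : A) (pairb x y a t + cntp x y t) by [].
rewrite big_split /=.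
case: t IH => [|b t] IH.
  by rewrite !big1 //= !add0n addn0.
have -> : \sum_(y : A) pairb x y a [:: b & t] = (a == x).
  rewrite /=; case: (a == x) => /=; last by rewrite big1.
  by rewrite -(sum_delta (fun _ => 1) b); apply: eq_bigr => y _; rewrite mul1n.
by rewrite -addnA IH eq_sym.
Qed.


Lemma gsh_sing (A : finType) (x : A) k : gsh_le (fun w => w = [:: x]) k.
Proof.
apply: (gsh_ext _ (gsh_letters (fun y => y = x) k)) => w.
by split=> [[y [-> ->]]|->]; [|exists x].
Qed.

Lemma gsh_notin (A : finType) (x : A) : gsh_le (fun w => x \notin w) 0.
Proof.
have H := gsh_compl (gsh_conc (gsh_all A 0) (gsh_conc (gsh_sing x 0) (gsh_all A 0))).
apply: (gsh_ext _ H) => w; split.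
  move=> N; apply/negP => /mem_split_last [u [v [E _]]]; apply: N.
  by exists u, (x :: v); split=> //; split=> //; exists [:: x], v.
move=> xw [u [z [E [_ [a [v [Ez [Ea _]]]]]]]].
by rewrite E Ez Ea mem_cat inE eqxx orbT in xw.
Qed.

Lemma Hcnt_count (A : finType) n (x : A) : 0 < n -> Hcnt n (fun w => count_mem x w).
Proof.
move=> n0; apply: (sep_Hcnt n0 (gsh_notin x) (gsh_conc (gsh_sing x 0) (gsh_notin x))).
  by move=> w; split=> /count_memPn.
move=> w k; rewrite count_succ; split.
  move=> [u [v [-> [Hu xv]]]]; exists u, (x :: v); split=> //; split=> //.
  by exists [:: x], v.
by move=> [u [z [-> [Hu [a [v [-> [-> xv]]]]]]]]; exists u, v.
Qed.

Lemma gsh_cntp0 (A : finType) (x y : A) : gsh_le (fun w => cntp x y w = 0) 0.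
Proof.
have H := gsh_compl (gsh_conc (gsh_all A 0)
   (gsh_conc (gsh_sing x 0) (gsh_conc (gsh_sing y 0) (gsh_all A 0)))).
apply: (gsh_ext _ H) => w; rewrite cntp_zero; split.
  move=> N [u [v E]]; apply: N; exists u, [:: x, y & v]; split=> //; split=> //.
  exists [:: x], (y :: v); split=> //; split=> //; by exists [:: y], v.
move=> N [u [z [E [_ [a [b [Ez [Ea [c [v [Eb [Ec _]]]]]]]]]]]].
by apply: N; exists u, v; rewrite E Ez Eb Ea Ec.
Qed.

Lemma Hcnt_cntp_neq (A : finType) n (x y : A) : 0 < n -> x != y ->
  Hcnt n (fun w => cntp x y w).
Proof.
move=> n0 xy.
apply: (sep_Hcnt n0 (gsh_cntp0 x y)
  (gsh_conc (gsh_sing x 0) (gsh_conc (gsh_sing y 0) (gsh_cntp0 x y)))) => // w k.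
rewrite cntp_succ //; split.
  move=> [u [v [-> [Hu Hv]]]]; exists u, [:: x, y & v]; split=> //; split=> //.
  exists [:: x], (y :: v); split=> //; split=> //; by exists [:: y], v.
move=> [u [z [-> [Hu [a [b [-> [-> [c [v [-> [-> Hv]]]]]]]]]]]].
by exists u, v.
Qed.

Lemma lasti_rcons (A : eqType) (x : A) w : lasti x w <-> exists u, w = rcons u x.
Proof.
case: w => [|a t] /=; first by split=> // [[[|b u]]].
split=> [/eqP <-|[u E]]; first by exists (belast a t); rewrite lastI.
by rewrite lastI in E; move/rcons_inj: E => [_ ->].
Qed.

Lemma Hcnt_lasti (A : finType) n (x : A) : Hcnt n (fun w => lasti x w).
Proof.
move=> r.
have Hl : gsh_le (fun w => lasti x w) 1.
  apply: (gsh_ext _ (gsh_conc (gsh_all A 1) (gsh_sing x 1))) => w.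
  rewrite lasti_rcons; split=> [[u [v [-> [_ ->]]]]|[u ->]]; first by exists u; rewrite cats1.
  by exists u, [:: x]; rewrite cats1.
have H := gsh_union (gsh_inter Hl (gsh_const _ (1 %% n = r) 1))
                    (gsh_inter (gsh_compl Hl) (gsh_const _ (0 %% n = r) 1)).
apply: (gsh_ext _ H) => w; case: (lasti x w) => /=; split.
- by case=> [[]|[]].
- by left.
- by case=> [[]|[]].
- by right.
Qed.

Lemma Hcnt_cntp (A : finType) n (x y : A) : 0 < n -> Hcnt n (fun w => cntp x y w).
Proof.
move=> n0; case: (eqVneq x y) => [<-|xy]; last exact: Hcnt_cntp_neq.
apply: (Hcnt_sub n0 (c2 := fun w => \sum_(z | true && (z != x)) cntp x z w + lasti x w)
  (c3 := fun w => count_mem x w)).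
- apply: Hcnt_add => //; last exact: Hcnt_lasti.
  apply: Hcnt_sum => // z /= zx; apply: Hcnt_cntp_neq => //; by rewrite eq_sym.
- exact: Hcnt_count.
- by move=> w; rewrite -cnt_identity [in RHS](bigD1 x) //= addnA.
Qed.


Definition allowed m (I L : Type) (P : L -> I -> option 'I_m.+1) (A : Type)
  (phi : A -> rees 'I_m.+1 I L) (x y : A) : bool :=
  match phi x, phi y with
  | Some (_, _, lx), Some (jy, _, _) => if P lx jy is Some _ then true else false
  | _, _ => false
  end.

Fixpoint goodtail m (I L : Type) (P : L -> I -> option 'I_m.+1) (A : Type)
  (phi : A -> rees 'I_m.+1 I L) (x : A) (t : seq A) : bool :=
  match t with [::] => true | y :: t' => @allowed m I L P A phi x y && @goodtail m I L P A phi y t' end.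

Definition fv m (I L A : Type) (phi : A -> rees 'I_m.+1 I L) (x : A) : nat :=
  match phi x with Some (_, g, _) => val g | None => 0 end.

Definition hv m (I L : Type) (P : L -> I -> option 'I_m.+1) (A : Type)
  (phi : A -> rees 'I_m.+1 I L) (x y : A) : nat :=
  match phi x, phi y with
  | Some (_, _, lx), Some (jy, _, _) => if P lx jy is Some p then val p else 0
  | _, _ => 0
  end.

Fixpoint W2n m (I L : Type) (P : L -> I -> option 'I_m.+1) (A : Type)
  (phi : A -> rees 'I_m.+1 I L) (x : A) (t : seq A) : nat :=
  match t with [::] => 0 | y :: t' => @hv m I L P A phi x y + fv phi y + @W2n m I L P A phi y t' end.

Definition Wn m (I L : Type) (P : L -> I -> option 'I_m.+1) (A : Type)
  (phi : A -> rees 'I_m.+1 I L) (w : seq A) : nat :=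
  match w with [::] => 0 | x :: t => @fv m I L A phi x + W2n P phi x t end.

Definition Q3 m (I L A : Type) (phi : A -> rees 'I_m.+1 I L) (l' : L) (y : A) : Prop :=
  exists j gy, phi y = Some (j, gy, l').

Lemma foldl_None m I L (P : L -> I -> option 'I_m.+1) (s : seq (rees 'I_m.+1 I L)) :
  foldl (rees_mul P) None s = None.
Proof. by elim: s. Qed.

Lemma fold_char m I L (P : L -> I -> option 'I_m.+1) (A : Type)
  (phi : A -> rees 'I_m.+1 I L) t : forall x jx gx lx i0 (g0 : 'I_m.+1) i' g' l',
  phi x = Some (jx, gx, lx) ->
  (foldl (rees_mul P) (Some (i0, g0, lx)) (map phi t) = Some (i', g', l') <->
   goodtail P phi x t /\ i' = i0 /\ val g' = (val g0 + W2n P phi x t) %% m.+1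
   /\ Q3 phi l' (last x t)).
Proof.
elim: t => [|y t IH] x jx gx lx i0 g0 i' g' l' Hx /=.
  rewrite addn0 modn_small ?ltn_ord //; split.
    by case=> <- <- <-; do !split=> //; exists jx, gx.
  move=> [_ [-> [/val_inj -> [j [gy]]]]]; rewrite Hx; by case=> _ _ ->.
rewrite /allowed /hv Hx.
case Hy: (phi y) => [[[jy gy] ly]|].
  case Hp: (P lx jy) => [p|] /=.
    rewrite (IH y jy gy ly) //= /fv Hy -!addnA modnDml -!addnA.
    by rewrite modnDml -addnA.
  split; last by case.
  by move: (map phi t) => s; elim: s.
split; last by case.
by move: (map phi t) => s; elim: s.
Qed.


Lemma goodtail_char m (I L : Type) (P : L -> I -> option 'I_m.+1) (A : Type)
  (phi : A -> rees 'I_m.+1 I L) t : forall x,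
  goodtail P phi x t <->
  ~ exists u v a b, x :: t = u ++ a :: b :: v /\ allowed P phi a b = false.
Proof.
elim: t => [|y t IH] x /=.
  split=> // _ [[|c u] [v [a [b [E _]]]]] //.
  by case: u E => [|d u] // [].
case Hxy: (allowed P phi x y) => /=; rewrite ?IH; split.
- move=> N [[|c u] [v [a [b [E Hab]]]]].
    by case: E => Ea Eb _; rewrite -Ea -Eb Hxy in Hab.
  by apply: N; exists u, v, a, b; case: E => _ ->.
- move=> N [u [v [a [b [E Hab]]]]]; apply: N.
  by exists (x :: u), v, a, b; rewrite E.
- by [].
- move=> N; case: N; by exists [::], t, x, y.
Qed.

Definition N1 m (I L : Type) (A : finType) (phi : A -> rees 'I_m.+1 I L) (w : seq A) : nat :=
  \sum_(x : A) fv phi x * count_mem x w.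
Definition N2 m (I L : Type) (P : L -> I -> option 'I_m.+1) (A : finType)
  (phi : A -> rees 'I_m.+1 I L) (w : seq A) : nat :=
  \sum_(x : A) \sum_(y : A) hv P phi x y * cntp x y w.

Lemma N1_cons m (I L : Type) (A : finType) (phi : A -> rees 'I_m.+1 I L) a t :
  N1 phi (a :: t) = fv phi a + N1 phi t.
Proof.
rewrite /N1 (eq_bigr (fun x => fv phi x * (a == x) + fv phi x * count_mem x t)).
  by rewrite big_split /= sum_delta.
by move=> x _; rewrite /= mulnDr.
Qed.

Lemma sum_pair (A : finType) (F : A -> nat) (c : bool) (b : A) :
  \sum_(y : A) F y * (c && (b == y)) = F b * c.
Proof.
case: c => /=; first by rewrite sum_delta muln1.
by rewrite muln0 big1 // => y _; rewrite muln0.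
Qed.

Lemma N2_cons m (I L : Type) (P : L -> I -> option 'I_m.+1) (A : finType)
  (phi : A -> rees 'I_m.+1 I L) a t :
  N2 P phi (a :: t) = (if t is b :: _ then hv P phi a b else 0) + N2 P phi t.
Proof.
rewrite /N2 (eq_bigr (fun x => \sum_(y : A) hv P phi x y * pairb x y a t +
                              \sum_(y : A) hv P phi x y * cntp x y t)).
  rewrite big_split /=; congr (_ + _).
  case: t => [|b t] /=.
    by rewrite big1 // => x _; rewrite big1 // => y _; rewrite muln0.
  rewrite (eq_bigr (fun x => hv P phi x b * (a == x))); first by rewrite sum_delta.
  by move=> x _; rewrite sum_pair.
by move=> x _; rewrite -big_split /=; apply: eq_bigr => y _; rewrite mulnDr.
Qed.

Lemma Wn_N m (I L : Type) (P : L -> I -> option 'I_m.+1) (A : finType)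
  (phi : A -> rees 'I_m.+1 I L) w :
  Wn P phi w = N1 phi w + N2 P phi w.
Proof.
elim: w => [|a t IH].
  by rewrite /N1 /N2 /= !big1 // => x _; rewrite ?big1 // => *; rewrite muln0.
rewrite N1_cons N2_cons.
case: t IH => [|b t] IH /=.
  by rewrite add0n -addnA -IH.
by rewrite -!addnA; congr (_ + _); rewrite [RHS]addnCA -IH.
Qed.


Unset Implicit Arguments.

(* Z_n for n >= 1 is rendered as 'I_m.+1 (n = m.+1) with its additive group. *)
Theorem lemma3p2 (m : nat) (I L : Type) (hI : inhabited I) (hL : inhabited L)
  (P : L -> I -> option 'I_m.+1) (A : finType) (phi : A -> rees 'I_m.+1 I L)
  (i : I) (g : 'I_m.+1) (l : L) :
  gsh_le (preimage_lang P phi (Some (i, g, l))) 1.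
Proof.
have n0 : 0 < m.+1 by [].
pose Q1 := fun x => exists gx lx, phi x = Some (i, gx, lx).
pose K1 := fun w : seq A => exists x t, w = x :: t /\ Q1 x.
pose K2 := fun w : seq A =>
  ~ exists u v a b, w = u ++ a :: b :: v /\ allowed P phi a b = false.
pose K3 := fun w : seq A => exists u y, w = u ++ [:: y] /\ Q3 phi l y.
pose K4 := fun w : seq A => Wn P phi w %% m.+1 = val g.
have h1 : gsh_le K1 1.
  apply: (gsh_ext _ (gsh_conc (gsh_letters Q1 1) (gsh_all A 1))) => w.
  split=> [[u [v [-> [[x [-> Qx]] _]]]]|[x [t [-> Qx]]]]; first by exists x, v.
  by exists [:: x], t; split=> //; split=> //; exists x.
have hBad : gsh_le (fun w => exists a b, w = [:: a; b] /\ allowed P phi a b = false) 1.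
  have H := gsh_bigunion (fun a => gsh_conc (gsh_sing a 1)
                  (gsh_letters (fun b => allowed P phi a b = false) 1)).
  apply: (gsh_ext _ H) => w; split.
    by move=> [a [u [v [-> [-> [b [-> Hb]]]]]]]; exists a, b.
  move=> [a [b [-> Hab]]]; exists a, [:: a], [:: b]; split=> //; split=> //.
  by exists b.
have h2 : gsh_le K2 1.
  apply: gsh_compl.
  apply: (gsh_ext _ (gsh_conc (gsh_all A 1) (gsh_conc hBad (gsh_all A 1)))) => w.
  split.
    move=> [u [z [-> [_ [x [v [-> [[a [b [-> Hab]]] _]]]]]]]].
    by exists u, v, a, b; split=> //; rewrite -catA.
  move=> [u [v [a [b [-> Hab]]]]]; exists u, [:: a, b & v]; split=> //; split=> //.
  exists [:: a; b], v; split=> //; split=> //; by exists a, b.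
have h3 : gsh_le K3 1.
  apply: (gsh_ext _ (gsh_conc (gsh_all A 1) (gsh_letters (Q3 phi l) 1))) => w.
  split=> [[u [v [-> [_ [y [-> Qy]]]]]]|[u [y [-> Qy]]]]; first by exists u, y.
  by exists u, [:: y]; split=> //; split=> //; exists y.
have h4 : gsh_le K4 1.
  have HN : Hcnt m.+1 (fun w => N1 phi w + N2 P phi w).
    apply: Hcnt_add => //.
      apply: Hcnt_sum => // x _; apply: Hcnt_scale => //; exact: Hcnt_count.
    apply: Hcnt_sum => // x _; apply: Hcnt_sum => // y _.
    apply: Hcnt_scale => //; exact: Hcnt_cntp.
  by apply: (gsh_ext _ (HN (val g))) => w; rewrite /K4 Wn_N.
apply: (gsh_ext _ (gsh_inter h1 (gsh_inter h2 (gsh_inter h3 h4)))) => w.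
rewrite /preimage_lang; split.
  move=> [[x [t [-> [gx [lx Hx]]]]] [H2 [[u [y [Ew Qy]]] H4]]].
  rewrite /phibar; congr Some.
  rewrite Hx; apply (proj2 (@fold_char m I L P A phi t x i gx lx i gx i g l Hx)); split; first exact/goodtail_char.
  split=> //; split.
    by move: H4; rewrite /K4 /Wn /fv Hx.
  suff -> : last x t = y by [].
  by rewrite -[last x t]/(last x (x :: t)) Ew cats1 last_rcons.
case: w => [|x t] //= [].
case Hx: (phi x) => [[[jx gx] lx]|]; last first.
  by move: (map phi t) => s; elim: s.
move/(@fold_char m I L P A phi t x jx gx lx jx gx i g l Hx) => [Hg [Ei [Eg Ql]]].
subst jx; split; first by exists x, t; split=> //; exists gx, lx.
split; first exact/goodtail_char.
split.
  exists (belast x t), (last x t); split=> //; by rewrite cats1 -lastI.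
by rewrite /K4 /Wn /fv Hx.
Qed.
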